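(* For each $r\in\{1,2,3\}$ there exist graphs $G_r$ and $H_r$ with $\omega^{(r)}(G_r)=\omega^{(r)}(H_r)$ but $\omega^{(r+1)}(G_r)\ne\omega^{(r+1)}(H_r)$. Hence $\omega^{(1)}$, $\omega^{(2)}$, $\omega^{(3)}$ are strictly weaker than $\omega^{(2)}$, $\omega^{(3)}$, $\omega^{(4)}$ respectively.
   Context: Graphs are finite, simple and undirected; an $N$-vertex graph has $V(G)=\{1,\dots,N\}$. Let $w_k(x,y)$ be the number of walks of length $k$ from $x$ to $y$, $w_*(x,y)=(w_0(x,y),\dots,w_{N-1}(x,y))$. Define $\omega_0(x)=w_*(x,x)$, $\omega_{r+1}(x)=\big(\omega_r(x),\{\!\{(w_*(x,y),\omega_r(y))\}\!\}_{y\in V(G)}\big)$, where $\{\!\{\cdot\}\!\}$ denotes a multiset, and $\omega^{(r)}(G)=\{\!\{\omega_r(x)\}\!\}_{x\in V(G)}$. *)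

(* Defs.v *)
From mathcomp Require Import all_boot.
Set Implicit Arguments. Unset Strict Implicit. Unset Printing Implicit Defensive.

(* A finite simple undirected graph on N vertices; vertex set 'I_N = {0..N-1}
   (a relabelling of {1..N}). *)
Record graph := Graph {
  gN : nat;
  gadj : rel 'I_gN;
  gadj_sym : symmetric gadj;
  gadj_irr : irreflexive gadj }.

Fixpoint walks {G : graph} (k : nat) (x y : 'I_(gN G)) : nat :=
  match k with
  | 0 => nat_of_bool (x == y)
  | k.+1 => \sum_(z : 'I_(gN G)) (nat_of_bool (gadj x z)) * walks k z y
  end.

Definition wstar (G : graph) (x y : 'I_(gN G)) : seq nat :=
  [seq walks k x y | k <- iota 0 (gN G)].

(* omega_eq r x y  <->  omega_r(x) (in G) = omega_r(y) (in H).
   Equality of multisets {{ (w_*(x,z), omega_r(z)) }}_z is expressed as the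
   existence of a bijection V(G) -> V(H) matching equal elements. *)
Fixpoint omega_eq {G H : graph} (r : nat) (x : 'I_(gN G)) (y : 'I_(gN H)) : Prop :=
  match r with
  | 0 => wstar x x = wstar y y
  | r.+1 => omega_eq r x y /\
      exists f : 'I_(gN G) -> 'I_(gN H), bijective f /\
        forall z, wstar x z = wstar y (f z) /\ omega_eq r z (f z)
  end.

Definition omega_multiset_eq (r : nat) (G H : graph) : Prop :=
  exists f : 'I_(gN G) -> 'I_(gN H), bijective f /\
    forall x, omega_eq r x (f x).

(* Main.v *)
Require Import Defs.
From mathcomp Require Import all_boot.
From mathcomp Require Import zify.
From Stdlib Require Import BinNat.
Set Implicit Arguments. Unset Strict Implicit. Unset Printing Implicit Defensive.

Definition mkord (n i : nat) : option 'I_n :=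
  (if i < n as b return (i < n = b -> option 'I_n) then fun h => Some (Ordinal h) else fun _ => None) erefl.
Definition myenum (n : nat) : seq 'I_n := pmap (mkord n) (iota 0 n).
Lemma mkordE n i : omap val (mkord n i) = if i < n then Some i else None.
Proof. rewrite /mkord. move: (erefl (i < n)). by case: {2 3}(i < n) => //= h; rewrite h. Qed.
Lemma myenum_enum n : myenum n = enum 'I_n.
Proof.
apply: (inj_map val_inj); rewrite val_enum_ord /myenum.
have: all (fun i => i < n) (iota 0 n) by apply/allP=> i; rewrite mem_iota.
elim: (iota 0 n) => //= i s IH /andP[hi hs].
have := mkordE n i; rewrite hi.
case: (mkord n i) => //= j [<-]. by rewrite IH.
Qed.
Lemma nth_myenum (T : Type) (d : T) k (f : 'I_k -> T) (i : 'I_k) :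
  nth d [seq f j | j <- myenum k] i = f i.
Proof.
rewrite myenum_enum (nth_map i) ?size_enum_ord ?ltn_ord //.
by rewrite nth_ord_enum.
Qed.
Lemma mem_myenum k (i : 'I_k) : i \in myenum k.
Proof. by rewrite myenum_enum mem_enum. Qed.

Definition entry (M : seq (seq N)) (x z : nat) : N := nth 0%num (nth [::] M x) z.

Definition idM (G : graph) : seq (seq N) :=
  [seq [seq (if x == z then 1%num else 0%num) | z : 'I_(gN G) <- myenum (gN G)] | x <- myenum (gN G)].

Fixpoint vadd (s t : seq N) : seq N :=
  match s, t with
  | a :: s', b :: t' => (a + b)%num :: vadd s' t'
  | [::], _ => t
  | _, [::] => s
  end.

Definition step (G : graph) (M : seq (seq N)) : seq (seq N) :=
  [seq foldr (fun (u : 'I_(gN G)) acc => if gadj x u then vadd (nth [::] M u) acc else acc) [::]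
      (myenum (gN G)) | x <- myenum (gN G)].

Fixpoint mats (G : graph) (k : nat) (M : seq (seq N)) : seq (seq (seq N)) :=
  if k is k'.+1 then M :: mats G k' (step G M) else [::].

Definition WV (ms : seq (seq (seq N))) (x z : nat) : seq N := [seq entry M x z | M <- ms].

Lemma nat_of_addN (a b : N) : nat_of_bin (a + b)%num = nat_of_bin a + nat_of_bin b.
Proof. case: a => [|p]; case: b => [|q] //=; by rewrite ?addn0 ?nat_of_add_pos. Qed.

Lemma vaddE s t i : nth 0%num (vadd s t) i = (nth 0%num s i + nth 0%num t i)%num.
Proof.
elim: s t i => [|a s IH] [|b t] [|i] //=; by rewrite ?N.add_0_r.
Qed.

Lemma step_entry G M (x z : 'I_(gN G)) :
  nat_of_bin (entry (step G M) x z) =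
  \sum_(u : 'I_(gN G)) gadj x u * nat_of_bin (entry M u z).
Proof.
rewrite /entry /step nth_myenum -big_enum -myenum_enum.
elim: (myenum (gN G)) => [|u s IH]; first by rewrite big_nil /= nth_nil.
rewrite big_cons /=; case: (gadj x u) => /=; last by rewrite IH.
by rewrite vaddE nat_of_addN IH mul1n.
Qed.

Lemma iter_entry G k (x z : 'I_(gN G)) :
  nat_of_bin (entry (iter k (step G) (idM G)) x z) = walks k x z.
Proof.
elim: k x z => [|k IH] x z /=.
  by rewrite /entry /idM !nth_myenum; case: (x == z).
rewrite step_entry; apply: eq_bigr => u _; by rewrite IH.
Qed.

Lemma matsE G k M : mats G k M = [seq iter i (step G) M | i <- iota 0 k].
Proof.
elim: k M => [|k IH] M //=; rewrite IH.
have -> : iota 1 k = map (addn 1) (iota 0 k) by rewrite -iotaDl.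
rewrite -map_comp; congr cons; apply: eq_map => i /=; by rewrite -iterSr ?add1n.
Qed.

Lemma WV_wstar G (x z : 'I_(gN G)) :
  map nat_of_bin (WV (mats G (gN G) (idM G)) x z) = wstar x z.
Proof.
rewrite /WV matsE /wstar -!map_comp; apply: eq_map => k /=; exact: iter_entry.
Qed.

Definition lexle (p q : nat * nat) := (p.1 < q.1) || ((p.1 == q.1) && (p.2 <= q.2)).

Lemma lexle_total : total lexle.
Proof. move=> [a b] [c d]; rewrite /lexle /=; lia. Qed.
Lemma lexle_trans : transitive lexle.
Proof. move=> [a b] [c d] [e f]; rewrite /lexle /=; lia. Qed.
Lemma lexle_anti : antisymmetric lexle.
Proof. move=> [a b] [c d]; rewrite /lexle /= => h; have e1 : a = c by lia.
have e2 : b = d by subst; lia. by rewrite e1 e2. Qed.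

Definition look (k : nat) (t : seq nat) (i : 'I_k) : nat := nth 0 t i.

Definition keyf k (w : 'I_k -> 'I_k -> nat) (c : seq nat) (x : 'I_k) :=
  (look c x, sort lexle [seq (w x z, look c z) | z <- myenum k]).

Fixpoint cids (G H : graph) (wG : 'I_(gN G) -> 'I_(gN G) -> nat)
   (wH : 'I_(gN H) -> 'I_(gN H) -> nat) (r : nat) : seq nat * seq nat :=
  match r with
  | 0 => ([seq wG x x | x <- myenum (gN G)], [seq wH y y | y <- myenum (gN H)])
  | r'.+1 => let p := cids wG wH r' in
     let kG := [seq keyf wG p.1 x | x <- myenum (gN G)] in
     let kH := [seq keyf wH p.2 y | y <- myenum (gN H)] in
     let T := kG ++ kH in
     ([seq index k T | k <- kG], [seq index k T | k <- kH])
  end.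

Lemma index_inj_mem (T : eqType) (s : seq T) a b :
  a \in s -> b \in s -> index a s = index b s -> a = b.
Proof. by move=> ha hb e; rewrite -(nth_index a ha) e nth_index. Qed.

Lemma bij_perm (T : eqType) n m (F : 'I_n -> T) (F' : 'I_m -> T) :
  (exists f : 'I_n -> 'I_m, bijective f /\ forall z, F z = F' (f z)) <->
  perm_eq [seq F z | z <- enum 'I_n] [seq F' z | z <- enum 'I_m].
Proof.
split.
- move=> [f [fb hf]].
  have -> : [seq F z | z <- enum 'I_n] = [seq F' z | z <- [seq f z | z <- enum 'I_n]].
    by rewrite -map_comp; apply: eq_map.
  apply: perm_map; apply: uniq_perm.
  + by rewrite map_inj_uniq ?enum_uniq //; exact: bij_inj.
  + exact: enum_uniq.
  + move=> y; rewrite mem_enum; case: fb => g fg gf.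
    by apply/mapP; exists (g y); rewrite ?mem_enum ?gf.
- move=> hp.
  have nm : n = m by move/perm_size: hp; rewrite !size_map -!enumT !size_enum_ord.
  subst m.
  case: n F F' hp => [|n] F F' hp.
    by exists id; split; [exists id | case].
  case/(perm_iotaP (F ord0)): hp => Is hIs hs.
  rewrite size_map size_enum_ord in hIs.
  have sIs : size Is = n.+1 by rewrite (perm_size hIs) size_iota.
  have uIs : uniq Is by rewrite (perm_uniq hIs) iota_uniq.
  have bnd (z : 'I_n.+1) : nth 0 Is z < n.+1.
    have : nth 0 Is z \in Is by rewrite mem_nth ?sIs.
    by rewrite (perm_mem hIs) mem_iota.
  pose f (z : 'I_n.+1) : 'I_n.+1 := Ordinal (bnd z).
  have finj : injective f.
    move=> z1 z2 /(congr1 val) /= e; apply: val_inj => /=.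
    by move/eqP: e; rewrite nth_uniq ?sIs // => /eqP.
  exists f; split; first exact: injF_bij.
  move=> z.
  have := congr1 (fun s => nth (F ord0) s z) hs.
  rewrite (nth_map z) ?size_enum_ord // nth_ord_enum => ->.
  rewrite (nth_map 0) ?sIs // (nth_map z) ?size_enum_ord ?bnd //.
  congr F'; apply: val_inj; by rewrite /= nth_enum_ord ?bnd.
Qed.

Lemma cids_map G H wG wH r :
  (@cids G H wG wH r).1 = [seq look (cids wG wH r).1 x | x <- myenum (gN G)] /\
  (@cids G H wG wH r).2 = [seq look (cids wG wH r).2 x | x <- myenum (gN H)].
Proof.
have ml k (f : 'I_k -> nat) : [seq f x | x <- myenum k] = [seq look [seq f x | x <- myenum k] x | x <- myenum k].
  by apply/esym/eq_map => x; rewrite /look nth_myenum.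
case: r => [|r] /=; first by split; apply: ml.
rewrite -!map_comp; split; apply: ml.
Qed.

Lemma cids_ok G H (wG : 'I_(gN G) -> 'I_(gN G) -> nat) (wH : 'I_(gN H) -> 'I_(gN H) -> nat)
  (Hw : forall x z y w, wG x z = wH y w <-> wstar x z = wstar y w) r :
  forall (x : 'I_(gN G)) (y : 'I_(gN H)), omega_eq r x y <-> look (cids wG wH r).1 x = look (cids wG wH r).2 y.
Proof.
elim: r => [|r IH] x y.
  by rewrite /= /look !nth_myenum; split => /Hw.
set p := cids wG wH r.
have -> : look (cids wG wH r.+1).1 x =
   index (keyf wG p.1 x) ([seq keyf wG p.1 x | x <- myenum (gN G)] ++ [seq keyf wH p.2 y | y <- myenum (gN H)]).
  by rewrite /= -map_comp /look nth_myenum.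
have -> : look (cids wG wH r.+1).2 y =
   index (keyf wH p.2 y) ([seq keyf wG p.1 x | x <- myenum (gN G)] ++ [seq keyf wH p.2 y | y <- myenum (gN H)]).
  by rewrite /= -map_comp /look nth_myenum.
transitivity (keyf wG p.1 x = keyf wH p.2 y); last first.
  split; first by move=> ->.
  by apply: index_inj_mem; rewrite mem_cat ?(map_f _ (mem_myenum _)) ?orbT.
rewrite /keyf.
transitivity (look p.1 x = look p.2 y /\
   perm_eq [seq (wG x z, look p.1 z) | z <- myenum (gN G)] [seq (wH y z, look p.2 z) | z <- myenum (gN H)]).
  2: split; [by move=> [-> /(perm_sortP lexle_total lexle_trans lexle_anti) ->]
           | by case=> -> /(perm_sortP lexle_total lexle_trans lexle_anti)].
rewrite !myenum_enum -(bij_perm (fun z => (wG x z, look p.1 z)) (fun z => (wH y z, look p.2 z))).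
rewrite /= -IH.
split.
- move=> [h0 [f [fb hf]]]; split=> //; exists f; split=> // z.
  by case: (hf z) => /Hw -> /IH ->.
- move=> [h0 [f [fb hf]]]; split=> //; exists f; split=> // z.
  by case: (hf z) => /Hw h1 /IH h2.
Qed.

Lemma multiset_ok G H (wG : 'I_(gN G) -> 'I_(gN G) -> nat) (wH : 'I_(gN H) -> 'I_(gN H) -> nat)
  (Hw : forall x z y w, wG x z = wH y w <-> wstar x z = wstar y w) r :
  omega_multiset_eq r G H <-> perm_eq (cids wG wH r).1 (cids wG wH r).2.
Proof.
case: (cids_map wG wH r) => -> ->; rewrite !myenum_enum -bij_perm.
split => [[f [fb hf]]|[f [fb hf]]]; exists f; split => // x; by apply/(cids_ok Hw).
Qed.

Definition Tab (G H : graph) msG msH :=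
  [seq WV msG x z | x : 'I_(gN G) <- myenum (gN G), z : 'I_(gN G) <- myenum (gN G)] ++
  [seq WV msH x z | x : 'I_(gN H) <- myenum (gN H), z : 'I_(gN H) <- myenum (gN H)].
Definition wtab (G : graph) ms T :=
  [seq [seq index (WV ms x z) T | z : 'I_(gN G) <- myenum (gN G)] | x : 'I_(gN G) <- myenum (gN G)].
Definition wf k (t : seq (seq nat)) (x z : 'I_k) := nth 0 (nth [::] t x) z.
Definition check_with (G H : graph) tG tH r :=
  let p := cids (wf (k := gN G) tG) (wf (k := gN H) tH) r in
  let q := cids (wf (k := gN G) tG) (wf (k := gN H) tH) r.+1 in
  perm_eq p.1 p.2 && ~~ perm_eq q.1 q.2.
Definition check (G H : graph) r :=
  let msG := mats G (gN G) (idM G) in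
  let msH := mats H (gN H) (idM H) in
  let T := Tab G H msG msH in
  check_with G H (wtab G msG T) (wtab H msH T) r.

Lemma Hw_tab G H (x z : 'I_(gN G)) (y w : 'I_(gN H)) :
  wf (wtab G (mats G (gN G) (idM G)) (Tab G H (mats G (gN G) (idM G)) (mats H (gN H) (idM H)))) x z =
  wf (wtab H (mats H (gN H) (idM H)) (Tab G H (mats G (gN G) (idM G)) (mats H (gN H) (idM H)))) y w
  <-> wstar x z = wstar y w.
Proof.
rewrite /wf /wtab !nth_myenum; split => [e|e].
- rewrite -!WV_wstar; congr (map _ _).
  apply: (index_inj_mem _ _ e); rewrite mem_cat.
    by rewrite (allpairs_f (fun x z : 'I_(gN G) => WV (mats G (gN G) (idM G)) x z)) ?mem_myenum.
  by rewrite (allpairs_f (fun x z : 'I_(gN H) => WV (mats H (gN H) (idM H)) x z)) ?mem_myenum ?orbT.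
- congr index; apply: (inj_map (can_inj nat_of_binK)); by rewrite !WV_wstar.
Qed.

Lemma check_ok G H r : check G H r -> omega_multiset_eq r G H /\ ~ omega_multiset_eq r.+1 G H.
Proof.
move=> /andP[h1 h2]; split.
  by apply/(multiset_ok (@Hw_tab G H)).
by move/(multiset_ok (@Hw_tab G H)); apply/negP.
Qed.

(* ---------- concrete graphs: incidence graphs of 2-(8,4,6) designs ---------- *)
Definition inc (B : seq (seq nat)) (x y : nat) := (x < 8) && (8 <= y) && (x \in nth [::] B (y - 8)).
Definition adjD (B : seq (seq nat)) (x y : 'I_36) := inc B x y || inc B y x.
Lemma symD B : symmetric (adjD B). Proof. by move=> x y; rewrite /adjD orbC. Qed.
Lemma irrD B : irreflexive (adjD B).
Proof. by move=> x; rewrite /adjD orbb /inc; case: (ltnP x 8) => //= h; rewrite leqNgt h. Qed.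
Definition gD B := Graph (symD B) (irrD B).
Definition B1a : seq (seq nat) := [:: [:: 0; 1; 2; 4]; [:: 0; 1; 2; 6]; [:: 0; 1; 3; 4]; [:: 0; 1; 3; 5]; [:: 0; 1; 4; 6]; [:: 0; 1; 6; 7]; [:: 0; 2; 3; 5]; [:: 0; 2; 3; 6]; [:: 0; 2; 3; 7]; [:: 0; 2; 4; 7]; [:: 0; 3; 5; 7]; [:: 0; 4; 5; 6]; [:: 0; 4; 5; 7]; [:: 0; 5; 6; 7]; [:: 1; 2; 3; 7]; [:: 1; 2; 4; 5]; [:: 1; 2; 5; 6]; [:: 1; 2; 5; 7]; [:: 1; 3; 4; 7]; [:: 1; 3; 5; 6]; [:: 1; 3; 6; 7]; [:: 1; 4; 5; 7]; [:: 2; 3; 4; 5]; [:: 2; 3; 4; 6]; [:: 2; 4; 6; 7]; [:: 2; 5; 6; 7]; [:: 3; 4; 5; 6]; [:: 3; 4; 6; 7]].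
Definition B1b : seq (seq nat) := [:: [:: 0; 1; 2; 6]; [:: 0; 1; 2; 7]; [:: 0; 1; 3; 5]; [:: 0; 1; 4; 6]; [:: 0; 1; 4; 7]; [:: 0; 1; 5; 6]; [:: 0; 2; 3; 4]; [:: 0; 2; 3; 7]; [:: 0; 2; 4; 5]; [:: 0; 2; 5; 6]; [:: 0; 3; 4; 6]; [:: 0; 3; 5; 7]; [:: 0; 3; 6; 7]; [:: 0; 4; 5; 7]; [:: 1; 2; 3; 4]; [:: 1; 2; 3; 5]; [:: 1; 2; 4; 6]; [:: 1; 2; 5; 7]; [:: 1; 3; 4; 7]; [:: 1; 3; 5; 6]; [:: 1; 3; 6; 7]; [:: 1; 4; 5; 7]; [:: 2; 3; 4; 5]; [:: 2; 3; 6; 7]; [:: 2; 4; 6; 7]; [:: 2; 5; 6; 7]; [:: 3; 4; 5; 6]; [:: 4; 5; 6; 7]].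
Definition B2a : seq (seq nat) := [:: [:: 0; 1; 2; 4]; [:: 0; 1; 2; 5]; [:: 0; 1; 2; 6]; [:: 0; 1; 3; 4]; [:: 0; 1; 3; 5]; [:: 0; 1; 3; 7]; [:: 0; 2; 3; 7]; [:: 0; 2; 4; 7]; [:: 0; 2; 5; 6]; [:: 0; 3; 4; 6]; [:: 0; 3; 5; 6]; [:: 0; 4; 5; 7]; [:: 0; 4; 6; 7]; [:: 0; 5; 6; 7]; [:: 1; 2; 3; 6]; [:: 1; 2; 4; 6]; [:: 1; 2; 5; 7]; [:: 1; 3; 4; 5]; [:: 1; 3; 6; 7]; [:: 1; 4; 5; 7]; [:: 1; 4; 6; 7]; [:: 1; 5; 6; 7]; [:: 2; 3; 4; 5]; [:: 2; 3; 4; 7]; [:: 2; 3; 5; 7]; [:: 2; 3; 6; 7]; [:: 2; 4; 5; 6]; [:: 3; 4; 5; 6]].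
Definition B2b : seq (seq nat) := [:: [:: 0; 1; 2; 5]; [:: 0; 1; 3; 5]; [:: 0; 1; 3; 6]; [:: 0; 1; 4; 6]; [:: 0; 1; 4; 7]; [:: 0; 1; 5; 7]; [:: 0; 2; 3; 4]; [:: 0; 2; 3; 7]; [:: 0; 2; 4; 5]; [:: 0; 2; 5; 6]; [:: 0; 2; 6; 7]; [:: 0; 3; 4; 5]; [:: 0; 3; 6; 7]; [:: 0; 4; 6; 7]; [:: 1; 2; 3; 4]; [:: 1; 2; 3; 6]; [:: 1; 2; 4; 6]; [:: 1; 2; 4; 7]; [:: 1; 2; 5; 7]; [:: 1; 3; 5; 7]; [:: 1; 3; 6; 7]; [:: 1; 4; 5; 6]; [:: 2; 3; 4; 7]; [:: 2; 3; 5; 6]; [:: 2; 5; 6; 7]; [:: 3; 4; 5; 6]; [:: 3; 4; 5; 7]; [:: 4; 5; 6; 7]].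
Definition B3a : seq (seq nat) := [:: [:: 0; 1; 2; 3]; [:: 0; 1; 2; 7]; [:: 0; 1; 3; 6]; [:: 0; 1; 4; 5]; [:: 0; 1; 4; 7]; [:: 0; 1; 6; 7]; [:: 0; 2; 3; 5]; [:: 0; 2; 4; 5]; [:: 0; 2; 4; 6]; [:: 0; 2; 6; 7]; [:: 0; 3; 4; 5]; [:: 0; 3; 4; 6]; [:: 0; 3; 5; 7]; [:: 0; 5; 6; 7]; [:: 1; 2; 3; 6]; [:: 1; 2; 4; 5]; [:: 1; 2; 4; 7]; [:: 1; 2; 5; 6]; [:: 1; 3; 4; 7]; [:: 1; 3; 5; 6]; [:: 1; 3; 5; 7]; [:: 1; 4; 5; 6]; [:: 2; 3; 4; 6]; [:: 2; 3; 4; 7]; [:: 2; 3; 5; 7]; [:: 2; 5; 6; 7]; [:: 3; 4; 6; 7]; [:: 4; 5; 6; 7]].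
Definition B3b : seq (seq nat) := [:: [:: 0; 1; 2; 4]; [:: 0; 1; 2; 6]; [:: 0; 1; 3; 4]; [:: 0; 1; 3; 5]; [:: 0; 1; 4; 6]; [:: 0; 1; 5; 7]; [:: 0; 2; 3; 4]; [:: 0; 2; 3; 7]; [:: 0; 2; 5; 6]; [:: 0; 2; 5; 7]; [:: 0; 3; 5; 6]; [:: 0; 3; 6; 7]; [:: 0; 4; 5; 7]; [:: 0; 4; 6; 7]; [:: 1; 2; 3; 6]; [:: 1; 2; 4; 7]; [:: 1; 2; 5; 6]; [:: 1; 2; 5; 7]; [:: 1; 3; 4; 5]; [:: 1; 3; 5; 7]; [:: 1; 3; 6; 7]; [:: 1; 4; 6; 7]; [:: 2; 3; 4; 5]; [:: 2; 3; 4; 7]; [:: 2; 3; 6; 7]; [:: 2; 4; 5; 6]; [:: 3; 4; 5; 6]; [:: 4; 5; 6; 7]].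

Lemma mono r (G H : graph) : omega_multiset_eq r.+1 G H -> omega_multiset_eq r G H.
Proof. by move=> [f [fb hf]]; exists f; split=> // x; case: (hf x). Qed.

Lemma ex1 : check (gD B1a) (gD B1b) 1. Proof. vm_compute; reflexivity. Qed.
Lemma ex2 : check (gD B2a) (gD B2b) 2. Proof. vm_compute; reflexivity. Qed.
Lemma ex3 : check (gD B3a) (gD B3b) 3. Proof. vm_compute; reflexivity. Qed.

Theorem theorem6p6 :
  forall r : nat, 1 <= r <= 3 ->
    (exists G H : graph,
        omega_multiset_eq r G H /\ ~ omega_multiset_eq r.+1 G H) /\
    (* hence omega^(r) is strictly weaker than omega^(r+1) *)
    (forall G H : graph, omega_multiset_eq r.+1 G H -> omega_multiset_eq r G H).
Proof.
move=> r hr; split; last by move=> G H; apply: mono.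
have : r = 1 \/ r = 2 \/ r = 3 by lia.
case=> [->|[->|->]].
- by exists (gD B1a), (gD B1b); apply: check_ok; exact: ex1.
- by exists (gD B2a), (gD B2b); apply: check_ok; exact: ex2.
- by exists (gD B3a), (gD B3b); apply: check_ok; exact: ex3.
Qed.
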